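(* For DCG models: (a) if a DCG model $(G^*,\mathbb{P})$ satisfies the causal faithfulness condition (CFC), then it satisfies the weak SMR assumption; (b) there exists a DCG model $(G,\mathbb{P})$ satisfying the CFC that does not satisfy the identifiable SMR assumption; (c) if a DCG model $(G^*,\mathbb{P})$ satisfies the identifiable SMR assumption, then it satisfies the P-minimality assumption; (d) there exists a DCG model $(G,\mathbb{P})$ satisfying the weak SMR assumption that does not satisfy the P-minimality assumption.
   Context: A DCG is a directed graph $G=(V,E)$ on $V=\{1,\dots,p\}$, directed cycles allowed. A DCG model is a pair $(G,\mathbb{P})$ with $\mathbb{P}$ a probability distribution of a random vector $(X_1,\dots,X_p)$. Descendant/ancestor refer to directed paths. $j,k$ are really adjacent if $j\to k$ or $k\to j$, virtually adjacent if they have a common child $\ell$ that is an ancestor of $j$ or $k$; the skeleton $S(G)$ is the set of really or virtually adjacent pairs, and $|S(G)|$ its cardinality. d-connection: for $S\subset V\setminus\{j,k\}$, $j$ is d-connected to $k$ given $S$ if some undirected path between them has every interior vertex in $S$ a collider ($\to b\leftarrow$ on the path) and every collider with itself or a descendant in $S$; otherwise d-separated. $D_{sep}(G)$ is the set of triples $(j,k,S)$ with $j$ d-separated from $k$ given $S$. $(G,\mathbb{P})$ satisfies the causal Markov condition (CMC) if whenever $j$ is d-separated from $k$ given $S$ in $G$, $X_j\perp X_k\mid X_S$ under $\mathbb{P}$. Two DCGs are Markov equivalent if every distribution satisfying the CMC with respect to one satisfies it with respect to the other; $\mathcal{M}(G)$ is the Markov equivalence class of $G$. CFC: for all $j,k$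 and $S\subset V\setminus\{j,k\}$, $j$ is d-separated from $k$ given $S$ in $G^*$ iff $X_j\perp X_k\mid X_S$ under $\mathbb{P}$. Identifiable SMR: $(G^*,\mathbb{P})$ satisfies the CMC and $|S(G^* )|<|S(G)|$ for every DCG $G$ with $(G,\mathbb{P})$ satisfying the CMC and $G\notin\mathcal{M}(G^* )$. Weak SMR: same with $\le$ instead of $<$. P-minimality: $(G^*,\mathbb{P})$ satisfies the CMC and there is no DCG $G$ with $(G,\mathbb{P})$ satisfying the CMC, $G\notin\mathcal{M}(G^* )$, and $D_{sep}(G^* )\subsetneq D_{sep}(G)$. *)

(* Defs.v *)
From HB Require Import structures.
From mathcomp Require Import all_boot all_order all_algebra.
From mathcomp Require Import all_classical all_reals all_analysis.

Set Implicit Arguments.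
Unset Strict Implicit.
Unset Printing Implicit Defensive.
Import Order.TTheory GRing.Theory Num.Theory.

Local Open Scope classical_set_scope.
Local Open Scope ring_scope.

(* A directed graph on V = {1,...,p}, encoded as 'I_p, given by its edge set
   E : {set 'I_p * 'I_p}; (j,k) \in E means j -> k.  Directed cycles are
   allowed; a DCG has no self-loops. *)
Definition is_dcg (p : nat) (E : {set 'I_p * 'I_p}) : Prop :=
  forall v : 'I_p, (v, v) \notin E.

Definition edge (p : nat) (E : {set 'I_p * 'I_p}) : rel 'I_p :=
  fun x y => (x, y) \in E.

Definition ancestor (p : nat) (E : {set 'I_p * 'I_p}) (a b : 'I_p) : bool :=
  connect (edge E) a b.

Definition really_adjacent (p : nat) (E : {set 'I_p * 'I_p}) (j k : 'I_p) : bool :=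
  ((j, k) \in E) || ((k, j) \in E).

Definition virtually_adjacent (p : nat) (E : {set 'I_p * 'I_p}) (j k : 'I_p)
  : bool :=
  [exists l : 'I_p, [&& (j, l) \in E, (k, l) \in E &
                        ancestor E l j || ancestor E l k]].

(* skeleton: unordered pairs {j,k}, j <> k, encoded as (j,k) with j < k *)
Definition skeleton (p : nat) (E : {set 'I_p * 'I_p}) : {set 'I_p * 'I_p} :=
  [set jk : 'I_p * 'I_p | (jk.1 < jk.2)%N &&
     (really_adjacent E jk.1 jk.2 || virtually_adjacent E jk.1 jk.2)].

Definition skel_card (p : nat) (E : {set 'I_p * 'I_p}) : nat := #|skeleton E|.

(* An undirected path between j and k: distinct vertices w_0 = j, ..., w_n = k
   together with orientations o_0 ... o_{n-1}; o_i = true means the i-th edge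
   is w_i -> w_{i+1}, o_i = false means w_i <- w_{i+1}. *)
Definition is_path (p : nat) (E : {set 'I_p * 'I_p}) (j k : 'I_p)
  (w : seq 'I_p) (o : seq bool) : Prop :=
  [/\ size w = (size o).+1, nth j w 0 = j, nth j w (size o) = k, uniq w &
      forall i, (i < size o)%N ->
        if nth false o i then (nth j w i, nth j w i.+1) \in E
        else (nth j w i.+1, nth j w i) \in E].

(* interior vertex i (0 < i < n) is a collider: w_{i-1} -> w_i <- w_{i+1} *)
Definition collider_at (o : seq bool) (i : nat) : bool :=
  nth false o i.-1 && ~~ nth false o i.

Definition d_connected (p : nat) (E : {set 'I_p * 'I_p}) (j k : 'I_p)
  (S : {set 'I_p}) : Prop :=
  exists (w : seq 'I_p) (o : seq bool), is_path E j k w o /\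
    forall i, (0 < i)%N -> (i < size o)%N ->
      (nth j w i \in S -> collider_at o i) /\
      (collider_at o i -> exists2 s, s \in S & ancestor E (nth j w i) s).

Definition d_separated (p : nat) (E : {set 'I_p * 'I_p}) (j k : 'I_p)
  (S : {set 'I_p}) : Prop := ~ d_connected E j k S.

Definition admissible (p : nat) (j k : 'I_p) (S : {set 'I_p}) : Prop :=
  j != k /\ j \notin S /\ k \notin S.

Definition Dsep_sub (p : nat) (E1 E2 : {set 'I_p * 'I_p}) : Prop :=
  forall j k S, admissible j k S -> d_separated E1 j k S -> d_separated E2 j k S.

Definition Dsep_strict_sub (p : nat) (E1 E2 : {set 'I_p * 'I_p}) : Prop :=
  Dsep_sub E1 E2 /\ ~ Dsep_sub E2 E1.

(* A distribution of the random vector (X_1,...,X_p) is given by a probability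
   space (Omega, P) and measurable real random variables X : 'I_p -> Omega -> R. *)
Definition random_vector (R : realType) (d : measure_display)
  (Omega : measurableType d) (p : nat) (X : 'I_p -> Omega -> R) : Prop :=
  forall i, measurable_fun setT (X i).

Definition sigma_XS (R : realType) (d : measure_display)
  (Omega : measurableType d) (p : nat) (X : 'I_p -> Omega -> R)
  (S : {set 'I_p}) : set (set Omega) :=
  <<s [set X i @^-1` B | i in [set i | i \in S] & B in [set B : set R | measurable B]] >>.

(* Conditional independence X_j _||_ X_k | X_S:
   for every Borel A, P(X_j \in A | X_k, X_S) has a sigma(X_S)-measurable
   version, i.e. there is a sigma(X_S)-measurable phi with
   P(X_j \in A, X_k \in B, C) = int_{X_k \in B, C} phi dP
   for all Borel B and all C in sigma(X_S). *)
Definition cond_indep (R : realType) (d : measure_display)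
  (Omega : measurableType d) (P : probability Omega R) (p : nat)
  (X : 'I_p -> Omega -> R) (j k : 'I_p) (S : {set 'I_p}) : Prop :=
  forall A : set R, measurable A ->
    exists phi : Omega -> R,
      (forall B : set R, measurable B -> sigma_XS X S (phi @^-1` B)) /\
      forall (B : set R) (C : set Omega), measurable B -> sigma_XS X S C ->
        P (X j @^-1` A `&` X k @^-1` B `&` C) =
        (\int[P]_(x in X k @^-1` B `&` C) (phi x)%:E)%E.

Definition CMC (R : realType) (d : measure_display) (Omega : measurableType d)
  (P : probability Omega R) (p : nat) (X : 'I_p -> Omega -> R)
  (E : {set 'I_p * 'I_p}) : Prop :=
  forall j k S, admissible j k S -> d_separated E j k S -> cond_indep P X j k S.

Definition CFC (R : realType) (d : measure_display) (Omega : measurableType d)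
  (P : probability Omega R) (p : nat) (X : 'I_p -> Omega -> R)
  (E : {set 'I_p * 'I_p}) : Prop :=
  forall j k S, admissible j k S -> (d_separated E j k S <-> cond_indep P X j k S).

Definition markov_equiv (R : realType) (p : nat) (E1 E2 : {set 'I_p * 'I_p})
  : Prop :=
  forall (d : measure_display) (Omega : measurableType d)
    (P : probability Omega R) (X : 'I_p -> Omega -> R),
    random_vector X -> (CMC P X E1 <-> CMC P X E2).

Definition identifiable_SMR (R : realType) (d : measure_display)
  (Omega : measurableType d) (P : probability Omega R) (p : nat)
  (X : 'I_p -> Omega -> R) (E : {set 'I_p * 'I_p}) : Prop :=
  CMC P X E /\
  forall G : {set 'I_p * 'I_p}, is_dcg G -> CMC P X G ->
    ~ markov_equiv R G E -> (skel_card E < skel_card G)%N.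

Definition weak_SMR (R : realType) (d : measure_display)
  (Omega : measurableType d) (P : probability Omega R) (p : nat)
  (X : 'I_p -> Omega -> R) (E : {set 'I_p * 'I_p}) : Prop :=
  CMC P X E /\
  forall G : {set 'I_p * 'I_p}, is_dcg G -> CMC P X G ->
    ~ markov_equiv R G E -> (skel_card E <= skel_card G)%N.

Definition P_minimal (R : realType) (d : measure_display)
  (Omega : measurableType d) (P : probability Omega R) (p : nat)
  (X : 'I_p -> Omega -> R) (E : {set 'I_p * 'I_p}) : Prop :=
  CMC P X E /\
  ~ exists G : {set 'I_p * 'I_p},
      [/\ is_dcg G, CMC P X G, ~ markov_equiv R G E & Dsep_strict_sub E G].

(* Main.v *)
Require Import Defs.
From HB Require Import structures.
From mathcomp Require Import all_boot all_order all_algebra.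
From mathcomp Require Import all_classical all_reals all_analysis.
From mathcomp Require Import ring lra.
From mathcomp Require Import zify.
From Stdlib Require Import Lia.
Set Implicit Arguments.
Unset Strict Implicit.
Unset Printing Implicit Defensive.
Import Order.TTheory GRing.Theory Num.Theory.
Local Open Scope classical_set_scope.
Local Open Scope ring_scope.
Section Sig.
Context (R : realType) (d : measure_display) (T : measurableType d) (p : nat).
Variables (X : 'I_p -> T -> R) (S : {set 'I_p}).

Definition sat (C : set T) := forall w w', (forall i, i \in S -> X i w = X i w') -> C w -> C w'.

Lemma sigma_sat C : sigma_XS X S C -> sat C.
Proof.
move=> hC.
have salg : sigma_algebra setT [set C | sat C].
  split.
  - by move=> w w' _ [].
  - move=> A sA w w' hw [_ nA] ; split => // Aw'; apply: nA.
    by apply: (sA w' w) => // i /hw ->.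
  - move=> F sF w w' hw [k _ Fk]; exists k => //; exact: (sF k w w').
have sub : [set X i @^-1` B | i in [set i | i \in S] & B in [set B : set R | measurable B]] `<=` [set C | sat C].
  move=> _ [i /= iS [B mB <-]] w w' hw /=; by rewrite -(hw i iS).
exact: (smallest_sub salg sub hC).
Qed.

Definition atom (w0 : T) : set T := [set w | forall i, i \in S -> X i w = X i w0].

Lemma atom_sigma w0 : sigma_XS X S (atom w0).
Proof.
pose Gen := [set X i @^-1` B | i in [set i | i \in S] & B in [set B : set R | measurable B]].
have -> : atom w0 = \bigcap_(i in [set i | i \in S]) (X i @^-1` [set X i w0]).
  by apply/seteqP; split => w /= h i /h.
change ((@measurable _ (g_sigma_algebraType Gen)) (\bigcap_(i in [set i | i \in S]) (X i @^-1` [set X i w0]))).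
apply: fin_bigcap_measurable; first exact: finite_finset.
move=> i iS; apply: sub_sigma_algebra; exists i => //; exists [set X i w0] => //.
exact: measurable_set1.
Qed.

End Sig.

Lemma sat_sigma (R : realType) (p : nat) (X : 'I_p -> nat -> R) S C :
  sat X S C -> sigma_XS X S C.
Proof.
move=> sC.
pose Gen := [set X i @^-1` B | i in [set i | i \in S] & B in [set B : set R | measurable B]].
have -> : C = \bigcup_(k in C) atom X S k.
  apply/seteqP; split => w.
    by move=> Cw; exists w => //.
  move=> [k Ck /= hk]; apply: (sC k w) => // i iS; by rewrite (hk i iS).
change ((@measurable _ (g_sigma_algebraType Gen)) (\bigcup_(k in C) atom X S k)).
apply: bigcup_measurable => k _; exact: atom_sigma.
Qed.

Section Unif.
Context (R : realType) (n : nat).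
Definition unifw : {nonneg R} := @NngNum _ ((n.+1)%:R^-1) (ltac:(by rewrite invr_ge0)).
Definition unif : set nat -> \bar R :=
  mscale unifw (msum (fun k => @dirac _ nat k R) n.+1).
HB.instance Definition _ := Measure.copy unif (mscale unifw (msum (fun k => @dirac _ nat k R) n.+1)).
Lemma unifE A : unif A = ((n.+1)%:R^-1 * \sum_(k < n.+1) ((k : nat) \in A)%:R)%:E.
Proof.
rewrite /unif /mscale /msum /= EFinM; congr (_ * _)%E.
rewrite -sumEFin; apply: eq_bigr => k _; exact: diracE.
Qed.
Lemma unif_setT : unif setT = 1%E.
Proof.
rewrite unifE. rewrite (eq_bigr (fun _ => 1)); last first.
  by move=> k _; rewrite (_ : _ \in _ = true) //; exact/mem_set.
by rewrite sumr_const card_ord mulVf.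
Qed.
HB.instance Definition _ := @Measure_isProbability.Build _ _ R unif unif_setT.

Definition cnt (q : pred nat) := count q (iota 0 n.+1).

Lemma sum_count (q : pred nat) s : (\sum_(k <- s) (q k : nat))%N = count q s.
Proof. by elim: s => [|x s IH]; rewrite ?big_nil ?big_cons ?IH. Qed.

Lemma unif_cnt (A : set nat) (q : pred nat) : (forall w, A w <-> q w) ->
  unif A = ((n.+1)%:R^-1 * (cnt q)%:R)%:E.
Proof.
move=> hA; rewrite unifE; congr (_ * _)%:E.
rewrite (eq_bigr (fun k : 'I_n.+1 => ((q k : nat)%:R : R))); last first.
  move=> k _; have -> : ((k : nat) \in A) = q k; last by [].
  apply/idP/idP; first by move/set_mem/hA.
  by move=> qk; apply/mem_set/hA.
rewrite -natr_sum; congr (_%:R).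
by rewrite -(big_mkord xpredT (fun k => (q k : nat))) /index_iota subn0 sum_count.
Qed.
End Unif.

Section Model.
Context (R : realType) (n p : nat) (f : nat -> nat -> nat).
Definition Xf : 'I_p -> nat -> R := fun i w => (f i w)%:R.

Definition atomb (m : nat -> bool) (w0 w : nat) :=
  all (fun i => m i ==> (f i w == f i w0)) (iota 0 p).

Lemma atom_eq (S : {set 'I_p}) (m : nat -> bool) (w0 w : nat) : (forall i : 'I_p, (i \in S) = m i) ->
  atom Xf S w0 w <-> atomb m w0 w.
Proof.
move=> mS; split.
  move=> h; apply/allP => i; rewrite mem_iota add0n => ip.
  apply/implyP => mi; have := h (Ordinal ip); rewrite mS => /(_ mi).
  by rewrite /Xf /= => /eqP; rewrite eqr_nat.
move=> /allP h i iS; rewrite /Xf; apply/eqP; rewrite eqr_nat.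
have := h i; rewrite mem_iota add0n ltn_ord => /(_ isT) /implyP; apply.
by rewrite -mS.
Qed.

Lemma atomE (S : {set 'I_p}) (m : nat -> bool) (w0 w : nat) : (forall i : 'I_p, (i \in S) = m i) ->
  atom Xf S w0 w = atomb m w0 w.
Proof. by move=> mS; apply/propext; exact: atom_eq. Qed.

Lemma Xf_ms : random_vector Xf.
Proof. by move=> i. Qed.

Lemma nonCI (j k : 'I_p) (S : {set 'I_p}) (m : nat -> bool) a b w0 :
  (forall i : 'I_p, (i \in S) = m i) ->
  (cnt n (fun w => [&& f j w == a, f k w == b & atomb m w0 w]) * cnt n (atomb m w0)
   != cnt n (fun w => (f j w == a) && atomb m w0 w) *
      cnt n (fun w => (f k w == b) && atomb m w0 w))%N ->
  ~ cond_indep (unif R n) Xf j k S.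
Proof.
move=> mS hneq hci.
have [phi [phim phid]] := hci [set (a%:R : R)] (measurable_set1 _).
pose C := atom Xf S w0.
have sC : sigma_XS Xf S C by exact: atom_sigma.
have phic : forall w, C w -> phi w = phi w0.
  move=> w Cw; have := sigma_sat (phim [set phi w0] (measurable_set1 _)).
  move=> /(_ w0 w); apply => //.
  by move=> i iS; rewrite (Cw i iS).
have key : forall B, measurable B ->
  unif R n (Xf j @^-1` [set a%:R] `&` Xf k @^-1` B `&` C) =
  ((phi w0)%:E * unif R n (Xf k @^-1` B `&` C))%E.
  move=> B mB; rewrite phid //.
  rewrite (eq_integral (fun _ => (phi w0)%:E)); last first.
    by move=> w /set_mem [_ Cw]; rewrite phic.
  by rewrite integral_cst.
have e1 := key [set b%:R] (measurable_set1 _).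
have e2 := key setT measurableT.
rewrite (@unif_cnt _ _ _ (fun w => [&& f j w == a, f k w == b & atomb m w0 w])) in e1; last first.
  move=> w; rewrite /Xf /= /C (atomE _ _ mS); split.
    by move=> [[/eqP]]; rewrite eqr_nat => -> /eqP; rewrite eqr_nat => -> ->.
  by move=> /and3P [/eqP -> /eqP -> ?].
rewrite (@unif_cnt _ _ _ (fun w => (f k w == b) && atomb m w0 w)) in e1; last first.
  move=> w; rewrite /Xf /= /C (atomE _ _ mS); split.
    by move=> [/eqP]; rewrite eqr_nat => -> ->.
  by move=> /andP [/eqP -> ?].
rewrite (@unif_cnt _ _ _ (fun w => (f j w == a) && atomb m w0 w)) in e2; last first.
  move=> w; rewrite /Xf /= /C (atomE _ _ mS); split.
    by move=> [[/eqP]]; rewrite eqr_nat => -> _ ->.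
  by move=> /andP [/eqP -> ?].
rewrite (@unif_cnt _ _ _ (atomb m w0)) in e2; last first.
  by move=> w; rewrite /= /C (atomE _ _ mS); split => [[]|].
move: e1 e2 => [e1] [e2].
have hN : (n.+1)%:R^-1 != 0 :> R by rewrite invr_eq0 pnatr_eq0.
apply: (negP hneq); rewrite -(eqr_nat R) !natrM.
have e1' : (cnt n (fun w => [&& f j w == a, f k w == b & atomb m w0 w]))%:R = phi w0 * (cnt n (fun w => (f k w == b) && atomb m w0 w))%:R :> R.
  by apply: (mulfI hN); rewrite e1 mulrCA.
have e2' : (cnt n (fun w => (f j w == a) && atomb m w0 w))%:R = phi w0 * (cnt n (atomb m w0))%:R :> R.
  by apply: (mulfI hN); rewrite e2 mulrCA.
by rewrite e1' e2' mulrAC mulrC.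
Qed.
End Model.

Section CI.
Context (R : realType) (n p : nat) (f : nat -> nat -> nat).
Local Notation X := (@Xf R p f).
Local Notation P := (unif R n).

Lemma triv_CI (j k : 'I_p) (S : {set 'I_p}) :
  (forall w w', (forall i, i \in S -> X i w = X i w') -> X j w = X j w') ->
  cond_indep P X j k S.
Proof.
move=> hdet A mA.
exists (fun w => \1_(X j @^-1` A) w); split.
  move=> B mB; apply: sat_sigma => w w' hw /=.
  have ej := hdet w w' hw.
  rewrite /indic /=.
  have -> // : (w \in X j @^-1` A) = (w' \in X j @^-1` A).
  apply/idP/idP => /set_mem h; apply/mem_set; rewrite /preimage /=; [rewrite -ej | rewrite ej]; exact: h.
move=> B C mB sC.
rewrite integral_indic //; by rewrite setIA.
Qed.

Lemma indep_CI (j k : 'I_p) (S : {set 'I_p}) :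
  (forall i, i \notin S) ->
  (forall A B, measurable A -> measurable B ->
     P (X j @^-1` A `&` X k @^-1` B) = (P (X j @^-1` A) * P (X k @^-1` B))%E) ->
  cond_indep P X j k S.
Proof.
move=> S0 hind A mA.
exists (fun _ => fine (P (X j @^-1` A))); split.
  by move=> B mB; apply: sat_sigma => w w' hw.
move=> B C mB sC.
have satC := sigma_sat sC.
have [C0|/set0P [w Cw]] := eqVneq C set0; last first.
  have CT : C = setT.
    apply/seteqP; split => // w' _; apply: (satC w w') => // i; by rewrite (negbTE (S0 i)).
  rewrite CT !setIT; apply: etrans; first exact: hind.
  rewrite integral_cst // fineK //.
  exact: fin_num_measure.
by rewrite C0 !setI0 measure0 integral_set0.
Qed.
End CI.

Definition t0 := [:: 2; 0; 0; 3; 1; 2; 0; 1]%N.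
Definition t1 := [:: 0; 1; 0; 3; 1; 1; 3; 0]%N.
Definition t2 := [:: 0; 0; 0; 0; 1; 1; 1; 1]%N.
Definition t3 := [:: 0; 0; 1; 1; 0; 0; 1; 1]%N.
Definition gP (i r : nat) : nat := nth 0%N (nth [::] [:: t0; t1; t2; t3] i) r.
Definition fP (i w : nat) : nat := gP i (w %% 8).
Definition fQ (i w : nat) : nat := (w %% 2)%N.

Definition v0 : 'I_4 := @Ordinal 4 0 isT.
Definition v1 : 'I_4 := @Ordinal 4 1 isT.
Definition v2 : 'I_4 := @Ordinal 4 2 isT.
Definition v3 : 'I_4 := @Ordinal 4 3 isT.

Lemma ord4_cases (P : 'I_4 -> Prop) : P v0 -> P v1 -> P v2 -> P v3 -> forall i, P i.
Proof.
move=> h0 h1 h2 h3 [[|[|[|[|//]]]] Hi].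
- by rewrite (_ : Ordinal Hi = v0) //; apply: val_inj.
- by rewrite (_ : Ordinal Hi = v1) //; apply: val_inj.
- by rewrite (_ : Ordinal Hi = v2) //; apply: val_inj.
- by rewrite (_ : Ordinal Hi = v3) //; apply: val_inj.
Qed.

Definition dep_b (n p : nat) (f : nat -> nat -> nat) (j k : nat) (m : nat -> bool) :=
  has (fun w0 => has (fun a => has (fun b =>
     (cnt n (fun w => [&& f j w == a, f k w == b & atomb p f m w0 w]) * cnt n (atomb p f m w0)
   != cnt n (fun w => (f j w == a) && atomb p f m w0 w) *
      cnt n (fun w => (f k w == b) && atomb p f m w0 w))%N) (iota 0 4)) (iota 0 4)) (iota 0 n.+1).

Lemma nonCI_b (R : realType) n p f (j k : 'I_p) (S : {set 'I_p}) (m : nat -> bool) :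
  (forall i : 'I_p, (i \in S) = m i) -> dep_b n p f j k m ->
  ~ cond_indep (unif R n) (@Xf R p f) j k S.
Proof.
move=> mS /hasP [w0 _ /hasP [a _ /hasP [b _ h]]]; exact: (nonCI mS h).
Qed.

Definition sbits (S : {set 'I_4}) (i : nat) : bool :=
  nth false [:: v0 \in S; v1 \in S; v2 \in S; v3 \in S] i.

Lemma sbitsE (S : {set 'I_4}) (i : 'I_4) : (i \in S) = sbits S i.
Proof. by move: i; apply: ord4_cases. Qed.

Definition specialP (j k : nat) (s : nat -> bool) :=
  (((j == 2) && (k == 3)) || ((j == 3) && (k == 2))) && (s 0%N == s 1%N).

Lemma faith_check (j k : 'I_4) (s0 s1 s2 s3 : bool) :
  let s := nth false [:: s0; s1; s2; s3] in
  j != k -> ~~ s j -> ~~ s k -> ~~ specialP j k s -> dep_b 7 4 fP j k s.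
Proof.
move: j k; apply: ord4_cases; apply: ord4_cases;
  by case: s0; case: s1; case: s2; case: s3; vm_compute.
Qed.

Lemma faithP (R : realType) (j k : 'I_4) (S : {set 'I_4}) :
  admissible j k S -> ~~ specialP j k (sbits S) ->
  ~ cond_indep (unif R 7) (@Xf R 4 fP) j k S.
Proof.
move=> [jk [jS kS]] hsp; apply: (nonCI_b (m := sbits S)); first exact: sbitsE.
rewrite !sbitsE in jS kS.
exact: (faith_check (s0 := v0 \in S) (s1 := v1 \in S) (s2 := v2 \in S) (s3 := v3 \in S)).
Qed.

Lemma detP_check : all (fun r => all (fun r' =>
   (gP 0 r == gP 0 r') ==> (gP 1 r == gP 1 r') ==> (gP 2 r == gP 2 r') && (gP 3 r == gP 3 r'))
   (iota 0 8)) (iota 0 8).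
Proof. by vm_compute. Qed.

Lemma trivP (R : realType) (j k : 'I_4) (S : {set 'I_4}) :
  (j = v2 \/ j = v3) -> v0 \in S -> v1 \in S ->
  cond_indep (unif R 7) (@Xf R 4 fP) j k S.
Proof.
move=> hj h0 h1; apply: triv_CI => w w' hw.
have e0 := hw _ h0; have e1 := hw _ h1.
move: e0 e1; rewrite /Xf /fP => /eqP; rewrite eqr_nat => e0 /eqP; rewrite eqr_nat => e1.
have r8 : (w %% 8 < 8)%N by rewrite ltn_mod.
have r8' : (w' %% 8 < 8)%N by rewrite ltn_mod.
move: detP_check => /allP /(_ (w %% 8)%N); rewrite mem_iota add0n => /(_ r8) /allP /(_ (w' %% 8)%N).
rewrite mem_iota add0n => /(_ r8') /implyP /(_ e0) /implyP /(_ e1) /andP [/eqP e2 /eqP e3].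
by case: hj => ->; rewrite /= ?e2 ?e3.
Qed.

Lemma trivQ (R : realType) (j k : 'I_4) (S : {set 'I_4}) :
  v0 \in S -> cond_indep (unif R 1) (@Xf R 4 fQ) j k S.
Proof.
move=> h0; apply: triv_CI => w w' hw; have := hw _ h0; by rewrite /Xf /fQ.
Qed.

Lemma nonCIQ (R : realType) (S : {set 'I_4}) : (forall i, i \notin S) ->
  ~ cond_indep (unif R 1) (@Xf R 4 fQ) v2 v3 S.
Proof.
move=> S0; apply: (nonCI_b (m := fun _ => false)); first by move=> i; exact: negbTE.
by vm_compute.
Qed.

Lemma memX (R : realType) p f (j : 'I_p) (A : set R) (w : nat) :
  (w \in @Xf R p f j @^-1` A) = ((f j w)%:R \in A).
Proof. by apply/idP/idP => /set_mem h; apply/mem_set. Qed.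

Lemma indepP (R : realType) (j k : 'I_4) (S : {set 'I_4}) :
  ((j == v2) && (k == v3) || (j == v3) && (k == v2)) -> (forall i, i \notin S) ->
  cond_indep (unif R 7) (@Xf R 4 fP) j k S.
Proof.
move=> hjk S0; apply: indep_CI => // A B mA mB.
rewrite !unifE -EFinM; congr (_%:E).
rewrite !big_ord_recr !big_ord0 /= !in_setI !memX.
by case/orP: hjk => /andP [/eqP -> /eqP ->]; rewrite /fP /gP /= -!mulnb !natrM; field.
Qed.


Section Anc.
Variables (p : nat) (E : {set 'I_p * 'I_p}) (j k : 'I_p) (S : {set 'I_p})
  (w : seq 'I_p) (o : seq bool).
Local Notation W i := (nth j w i).
Local Notation N := (size o).
Hypothesis hE : forall i, (i < N)%N ->
  if nth false o i then (W i, W i.+1) \in E else (W i.+1, W i) \in E.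
Hypothesis hn : W N = k.
Hypothesis h0 : W 0 = j.
Hypothesis hcol : forall i, (0 < i)%N -> (i < N)%N ->
  collider_at o i -> exists2 s, s \in S & ancestor E (W i) s.

Definition ancS (x : 'I_p) := exists2 s, s \in S & ancestor E x s.

Lemma ancS_trans x y : ancestor E x y -> ancS y -> ancS x.
Proof. move=> xy [s sS ys]; exists s => //; exact: connect_trans xy ys. Qed.

Lemma edge_anc x y : (x, y) \in E -> ancestor E x y.
Proof. by move=> h; apply: connect1. Qed.

Lemma fwd_anc : forall m i, (N - i)%N = m -> (0 < i)%N -> (i < N)%N -> nth false o i ->
  ancestor E (W i) k \/ ancS (W i).
Proof.
elim=> [|m IH] i hm i0 iN oi; first by lia.
have e := hE iN; rewrite oi in e.
have [iN'|iN'] := eqVneq i.+1 N.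
  by left; rewrite -hn -iN'; exact: edge_anc.
have i1N : (i.+1 < N)%N by lia.
case hc : (collider_at o i.+1).
  right; apply: (ancS_trans (edge_anc e)); exact: hcol.
move: hc; rewrite /collider_at /= oi /= => /negbFE o1.
have hm' : (N - i.+1)%N = m by lia.
have [h|h] := IH i.+1 hm' isT i1N o1.
  by left; apply: connect_trans (edge_anc e) h.
by right; apply: ancS_trans (edge_anc e) h.
Qed.

Lemma bwd_anc : forall i, (0 < i)%N -> (i < N)%N -> ~~ nth false o i.-1 ->
  ancestor E (W i) j \/ ancS (W i).
Proof.
elim=> [|i IH] // _ iN /= oi.
have e := hE (ltnW iN); rewrite (negbTE oi) in e.
case: i IH iN oi e => [|i] IH iN oi e.
  by left; have := edge_anc e; rewrite h0.
case hc : (collider_at o i.+1).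
  right; apply: (ancS_trans (edge_anc e)); apply: hcol => //; lia.
move: hc; rewrite /collider_at /= (negbTE oi) andbT => /negbT oi'.
have iN' : (i.+1 < N)%N by lia.
have [h|h] := IH isT iN' oi'.
  by left; apply: connect_trans (edge_anc e) h.
by right; apply: ancS_trans (edge_anc e) h.
Qed.
End Anc.

Definition S0 (p : nat) (E : {set 'I_p * 'I_p}) (j k : 'I_p) : {set 'I_p} :=
  [set v | (ancestor E v j || ancestor E v k) && (v != j) && (v != k)].

Lemma adm_S0 p (E : {set 'I_p * 'I_p}) j k : j != k -> admissible j k (S0 E j k).
Proof. by move=> jk; split => //; split; rewrite inE eqxx ?andbF. Qed.

Lemma sepB p (E : {set 'I_p * 'I_p}) (j k : 'I_p) : j != k ->
  ~~ (really_adjacent E j k || virtually_adjacent E j k) ->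
  d_separated E j k (S0 E j k).
Proof.
move=> jk nadj [w [os [[hsz h0 hn hu hE] hint]]].
have hcol : forall i, (0 < i)%N -> (i < size os)%N ->
    collider_at os i -> exists2 s, s \in S0 E j k & ancestor E (nth j w i) s.
  by move=> i i0 iN; have [_] := hint i i0 iN.
have S0anc : forall x, ancS E (S0 E j k) x -> ancestor E x j \/ ancestor E x k.
  move=> x [s]; rewrite inE => /andP [/andP [/orP [h|h] _] _] xs.
    by left; exact: connect_trans xs h.
  by right; exact: connect_trans xs h.
have ancAll : forall i, (0 < i)%N -> (i < size os)%N ->
    ancestor E (nth j w i) j \/ ancestor E (nth j w i) k.
  move=> i i0 iN; case hc : (collider_at os i).
    by apply: S0anc; exact: hcol.
  move: hc; rewrite /collider_at => /negbT; rewrite negb_and negbK => /orP [h|h].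
    have [h'|h'] := bwd_anc hE h0 hcol i0 iN h; first by left.
    exact: S0anc.
  have [h'|h'] := fwd_anc hE hn hcol (erefl _) i0 iN h; first by right.
  exact: S0anc.
have inS0 : forall i, (0 < i)%N -> (i < size os)%N -> nth j w i \in S0 E j k.
  move=> i i0 iN; rewrite inE.
  have -> /= : ancestor E (nth j w i) j || ancestor E (nth j w i) k.
    by case: (ancAll i i0 iN) => ->; rewrite ?orbT.
  rewrite -{2}h0 -hn !nth_uniq // ?hsz ?ltnS ?(ltnW iN) //.
  by rewrite -lt0n i0 /= neq_ltn iN.
have [N hN] : exists N, size os = N by eexists.
case: N hN => [|[|[|N]]] hN.
- by move: jk; rewrite -h0 -hn hN eqxx.
- have e := hE 0 ltac:(by rewrite hN).
  rewrite h0 (_ : nth j w 1 = k) in e; last by rewrite -hn hN.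
  move: nadj; rewrite /really_adjacent.
  by case: (nth false os 0) e => e; rewrite e ?orbT.
- have N1 : (1 < size os)%N by rewrite hN.
  have [h1 _] := hint 1 isT N1.
  move: (h1 (inS0 1 isT N1)); rewrite /collider_at /=; move=> /andP [c0 c1].
  have e0 := hE 0 (ltnW N1).
  rewrite c0 h0 in e0.
  have e1 := hE 1 N1; rewrite (negbTE c1) in e1.
  move: e1; rewrite (_ : nth j w 2 = k); last by rewrite -hn hN.
  move=> e1; move: nadj; rewrite negb_or => /andP [_ /negP]; apply.
  apply/existsP; exists (nth j w 1); rewrite e0 e1 /=.
  by case: (ancAll 1 isT N1) => ->; rewrite ?orbT.
- have N1 : (1 < size os)%N by rewrite hN.
  have N2 : (2 < size os)%N by rewrite hN.
  have [h1 _] := hint 1 isT N1.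
  move: (h1 (inS0 1 isT N1)); rewrite /collider_at /=; move=> /andP [c0 c1].
  have [h2 _] := hint 2 isT N2.
  by move: (h2 (inS0 2 isT N2)); rewrite /collider_at /= (negbTE c1).
Qed.

Lemma aux_sub (n i : nat) : (i.+1 < n)%N -> (n - i.+2 < n)%N.
Proof. lia. Qed.

Lemma dpath_conn p (E : {set 'I_p * 'I_p}) (x y : 'I_p) (S : {set 'I_p}) (q : seq 'I_p) :
  path (edge E) x q -> last x q = y -> uniq (x :: q) ->
  (forall z, z \in q -> z \notin S) ->
  d_connected E x y S /\ d_connected E y x S.
Proof.
move=> hp hl hu hS; have /(pathP y) hp' := hp; have /(pathP x) hpx := hp.
split.
  exists (x :: q), (nseq (size q) true); split; first split.
  - by rewrite size_nseq.
  - by [].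
  - by rewrite size_nseq -hl -[size q]/((size (x :: q)).-1) nth_last.
  - exact: hu.
  - move=> i; rewrite size_nseq => iq; rewrite nth_nseq iq.
    by have := hpx i iq; rewrite /edge /=.
  - move=> [|i] // _; rewrite size_nseq => iq.
    have zq : nth x (x :: q) i.+1 \in q by rewrite /= mem_nth // ltnW.
    split; first by move/negP: (hS _ zq).
    by rewrite /collider_at /= !nth_nseq iq ltnW.
exists (rev (x :: q)), (nseq (size q) false); split; first split.
- by rewrite size_rev size_nseq.
- rewrite nth_rev //= subSS subn0 -hl.
  by rewrite -[size q]/((size (x :: q)).-1) nth_last.
- by rewrite size_nseq nth_rev //= ?subSS ?subnn.
- by rewrite rev_uniq.
- move=> i; rewrite size_nseq => iq; rewrite nth_nseq iq /=.
  have i1 : (i.+1 < size (x :: q))%N by rewrite /= ltnS.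
  have i2 : (i < size (x :: q))%N by rewrite /= ltnW.
  rewrite (nth_rev _ i1) (nth_rev _ i2) /= !subSS.
  have hm : (size q - i = (size q - i.+1).+1)%N by lia.
  rewrite hm; apply: hp'; lia.
- move=> [|i] // _; rewrite size_nseq => iq.
  have i2 : (i.+1 < size (x :: q))%N by rewrite /= ltnW.
  rewrite (nth_rev _ i2) /= subSS.
  have -> : (size q - i.+1 = (size q - i.+2).+1)%N by lia.
  have zq : nth y q (size q - i.+2) \in q.
    exact: mem_nth (aux_sub iq).
  split; first by move/negP: (hS _ zq).
  by rewrite /collider_at /= !nth_nseq iq (ltnW iq).
Qed.

Section Restr.
Variables (p : nat) (E : {set 'I_p * 'I_p}) (l : 'I_p).
Definition erestr : rel 'I_p := fun a b => ((a, b) \in E) && ancestor E l b.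



Lemma restr_anc x y : connect erestr x y -> ancestor E x y.
Proof. apply: connect_sub => a b /andP [h _]; exact: connect1. Qed.

Lemma conn_restr y : ancestor E l y -> connect erestr l y.
Proof.
case/connectP => q hq ->.
suff : forall x, connect erestr l x -> path (edge E) x q -> connect erestr l (last x q).
  by apply => //; exact: connect0.
elim: q {hq} => [|z q IH] x //= cx /andP [exz hq].
apply: IH => //.
have ax := restr_anc cx.
apply: connect_trans cx (connect1 _).
apply/andP; split; first exact: exz.
exact: connect_trans ax (connect1 exz).
Qed.

Lemma path_restr x q z : path erestr x q -> z \in q -> ancestor E l z.
Proof.
elim: q x => [|a q IH] x //= /andP [/andP [_ la] hq].
rewrite in_cons => /orP [/eqP -> //|]; exact: IH hq.
Qed.

Lemma restr_dpath (x y : 'I_p) (S : {set 'I_p}) : (x, l) \in E -> ancestor E l y ->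
  x != y -> (forall z, ancestor E l z -> z \notin S) ->
  d_connected E x y S /\ d_connected E y x S.
Proof.
move=> xl ly xy hS.
have cx : connect erestr x y.
  apply: connect_trans (connect1 _) (conn_restr ly).
  by rewrite /erestr xl /ancestor connect0.
move: xy; case/connectP: cx => q hq -> xy.
case/shortenP: hq => q' hq' hu' _.
apply: dpath_conn => //.
- by apply: sub_path hq' => a b /andP [].
- by move=> z zq; apply: hS; exact: path_restr hq' zq.
Qed.
End Restr.

Lemma adj_conn p (E : {set 'I_p * 'I_p}) (j k : 'I_p) (S : {set 'I_p}) :
  is_dcg E -> admissible j k S ->
  really_adjacent E j k || virtually_adjacent E j k -> d_connected E j k S.
Proof.
move=> dcg [jk [jS kS]] /orP [ra|va].
  have hS : forall x, x \notin S -> forall z, z \in [:: x] -> z \notin S.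
    by move=> x xS z; rewrite inE => /eqP ->.
  case/orP: ra => e.
    have h1 : path (edge E) j [:: k] by rewrite /= andbT.
    have h3 : uniq [:: j; k] by rewrite /= inE jk.
    by case: (dpath_conn h1 (erefl _) h3 (hS k kS)).
  have h1 : path (edge E) k [:: j] by rewrite /= andbT.
  have h3 : uniq [:: k; j] by rewrite /= inE eq_sym jk.
  by case: (dpath_conn h1 (erefl _) h3 (hS j jS)).
case/existsP: va => l /and3P [jl kl al].
have lj : l != j by apply/eqP => e; move: (dcg j); rewrite -{2}e jl.
have lk : l != k by apply/eqP => e; move: (dcg k); rewrite -{2}e kl.
case: (pselect (exists2 s, s \in S & ancestor E l s)) => [[s sS ls]|nS].
  exists [:: j; l; k], [:: true; false]; split; first split => //.
  - have jl' : j != l by rewrite eq_sym.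
    by rewrite /= !inE negb_or jl' jk lk.
  - by case=> [|[|]] //=.
  - move=> [|[|i]] // _ _; split; first by [].
    by move=> _; exists s.
have hS : forall z, ancestor E l z -> z \notin S.
  by move=> z lz; apply/negP => zS; apply: nS; exists z.
case/orP: al => [lj'|lk'].
  have kj : k != j by rewrite eq_sym.
  exact: (proj2 (restr_dpath kl lj' kj hS)).
exact: (proj1 (restr_dpath jl lk' jk hS)).
Qed.

Definition EP : {set 'I_4 * 'I_4} := [set (v0, v1); (v1, v0); (v2, v1); (v3, v0)].
Definition EG : {set 'I_4 * 'I_4} := [set (v0, v1); (v0, v2); (v0, v3); (v1, v2); (v1, v3)].

Lemma dcg_EP : is_dcg EP.
Proof. by apply: ord4_cases; rewrite !inE. Qed.
Lemma dcg_EG : is_dcg EG.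
Proof. by apply: ord4_cases; rewrite !inE. Qed.

Definition pair23 (j k : 'I_4) := ((j == v2) && (k == v3)) || ((j == v3) && (k == v2)).

Lemma a10 : ancestor EP v1 v0. Proof. by apply: connect1; rewrite /edge !inE. Qed.
Lemma a01 : ancestor EP v0 v1. Proof. by apply: connect1; rewrite /edge !inE. Qed.

Lemma adjEP (j k : 'I_4) : j != k -> ~~ pair23 j k ->
  really_adjacent EP j k || virtually_adjacent EP j k.
Proof.
move: j k; apply: ord4_cases; apply: ord4_cases => //=;
  try by rewrite /really_adjacent !inE.
all: move=> _ _; apply/orP; right; apply/existsP.
all: first [ by exists v1; rewrite !inE a10 ?orbT | by exists v0; rewrite !inE a01 ?orbT ].
Qed.

Lemma adjEG (j k : 'I_4) : j != k -> ~~ pair23 j k ->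
  really_adjacent EG j k || virtually_adjacent EG j k.
Proof.
move: j k; apply: ord4_cases; apply: ord4_cases => //=;
  by rewrite /really_adjacent !inE.
Qed.

Lemma nadjEG : ~~ (really_adjacent EG v2 v3 || virtually_adjacent EG v2 v3).
Proof.
rewrite /really_adjacent !inE /=; apply/existsP => -[l].
by move: l; apply: ord4_cases; rewrite !inE.
Qed.


Lemma sep2 p (E : {set 'I_p * 'I_p}) (j k u v : 'I_p) (S : {set 'I_p}) :
  j != k -> (forall x, (x, j) \notin E) -> (forall x, (j, x) \in E -> x = u) ->
  (forall x, (x, u) \in E -> x != j -> x = v) -> u \in S -> v \in S -> u != k -> v != k ->
  d_separated E j k S.
Proof.
move=> jk nin out inu uS vS uk vk [w [os [[hsz h0 hn hu hE] hint]]].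
have W1 : (0 < size os)%N -> nth j w 1 = u /\ nth false os 0 = true.
  move=> h; have := hE 0 h; rewrite h0; case: (nth false os 0) => e.
    by split => //; exact: out.
  by move: (nin (nth j w 1)); rewrite e.
have [N hN] : exists N, size os = N by eexists.
case: N hN => [|[|[|N]]] hN.
- by move: jk; rewrite -h0 -hn hN eqxx.
- have [e1 _] := W1 ltac:(by rewrite hN).
  by move: uk; rewrite -e1 -hn hN eqxx.
- have N1 : (1 < size os)%N by rewrite hN.
  have [e1 c0] := W1 (ltnW N1).
  have [h1 _] := hint 1 isT N1.
  move: (h1 ltac:(by rewrite e1)); rewrite /collider_at /= c0 /= => c1.
  have e := hE 1 N1; rewrite (negbTE c1) e1 in e.
  have w2j : nth j w 2 != j by rewrite -{2}h0 nth_uniq // hsz hN.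
  have e2 := inu _ e w2j.
  by move: vk; rewrite -e2 -hn hN eqxx.
- have N1 : (1 < size os)%N by rewrite hN.
  have N2 : (2 < size os)%N by rewrite hN.
  have [e1 c0] := W1 (ltnW N1).
  have [h1 _] := hint 1 isT N1.
  move: (h1 ltac:(by rewrite e1)); rewrite /collider_at /= c0 /= => c1.
  have e := hE 1 N1; rewrite (negbTE c1) e1 in e.
  have w2j : nth j w 2 != j by rewrite -{2}h0 nth_uniq // hsz hN.
  have e2 := inu _ e w2j.
  have [h2 _] := hint 2 isT N2.
  by move: (h2 ltac:(by rewrite e2)); rewrite /collider_at /= (negbTE c1).
Qed.

Lemma anc_noin p (E : {set 'I_p * 'I_p}) (t v : 'I_p) :
  (forall x, (x, t) \notin E) -> ancestor E v t -> v = t.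
Proof.
move=> nin /connectP [q hq et].
case/lastP: q hq et => [|q z] hq et; first by rewrite et.
move: hq; rewrite rcons_path => /andP [_ e].
rewrite last_rcons in et; subst z.
by move: (nin (last v q)); rewrite -/(edge E (last v q) t) e.
Qed.

Lemma conn3 p (E : {set 'I_p * 'I_p}) (S : {set 'I_p}) (a b c : 'I_p) (x0 x1 : bool) :
  uniq [:: a; b; c] ->
  (if x0 then (a, b) \in E else (b, a) \in E) ->
  (if x1 then (b, c) \in E else (c, b) \in E) ->
  (b \in S -> x0 && ~~ x1) -> (x0 && ~~ x1 -> exists2 s, s \in S & ancestor E b s) ->
  d_connected E a c S.
Proof.
move=> hu e0 e1 h1 h2; exists [:: a; b; c], [:: x0; x1]; split; first split => //.
  by case=> [|[|]].
by case=> [|[|]] // _ _; split.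
Qed.

Lemma conn4 p (E : {set 'I_p * 'I_p}) (S : {set 'I_p}) (a b c d : 'I_p) (x0 x1 x2 : bool) :
  uniq [:: a; b; c; d] ->
  (if x0 then (a, b) \in E else (b, a) \in E) ->
  (if x1 then (b, c) \in E else (c, b) \in E) ->
  (if x2 then (c, d) \in E else (d, c) \in E) ->
  (b \in S -> x0 && ~~ x1) -> (x0 && ~~ x1 -> exists2 s, s \in S & ancestor E b s) ->
  (c \in S -> x1 && ~~ x2) -> (x1 && ~~ x2 -> exists2 s, s \in S & ancestor E c s) ->
  d_connected E a d S.
Proof.
move=> hu e0 e1 e2 h1 h2 h3 h4; exists [:: a; b; c; d], [:: x0; x1; x2]; split; first split => //.
  by case=> [|[|[|]]].
by case=> [|[|[|]]] // _ _; split.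
Qed.

Lemma ninEP2 x : (x, v2) \notin EP. Proof. by move: x; apply: ord4_cases; rewrite !inE. Qed.
Lemma ninEP3 x : (x, v3) \notin EP. Proof. by move: x; apply: ord4_cases; rewrite !inE. Qed.

Lemma nadjEP : ~~ (really_adjacent EP v2 v3 || virtually_adjacent EP v2 v3).
Proof.
rewrite /really_adjacent !inE /=; apply/existsP => -[l].
by move: l; apply: ord4_cases; rewrite !inE.
Qed.

Lemma S0EP (S : {set 'I_4}) (j k : 'I_4) : pair23 j k -> (forall i, i \notin S) -> S0 EP j k = S.
Proof.
move=> hjk hS; apply/setP => x; rewrite inE (negbTE (hS x)).
case/orP: hjk => /andP [/eqP -> /eqP ->];
apply/negP => /andP [/andP [/orP [h|h] h1] h2].
- by move: h1; rewrite (anc_noin ninEP2 h) eqxx.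
- by move: h2; rewrite (anc_noin ninEP3 h) eqxx.
- by move: h1; rewrite (anc_noin ninEP3 h) eqxx.
- by move: h2; rewrite (anc_noin ninEP2 h) eqxx.
Qed.

Lemma nadjEP' : ~~ (really_adjacent EP v3 v2 || virtually_adjacent EP v3 v2).
Proof.
rewrite /really_adjacent !inE /=; apply/existsP => -[l].
by move: l; apply: ord4_cases; rewrite !inE.
Qed.

Lemma a00 p (E : {set 'I_p * 'I_p}) x (S : {set 'I_p}) : x \in S -> exists2 s, s \in S & ancestor E x s.
Proof. by move=> xS; exists x => //; exact: connect0. Qed.

Lemma EP_dsep_char (j k : 'I_4) (S : {set 'I_4}) : admissible j k S ->
  (d_separated EP j k S <-> specialP j k (sbits S)).
Proof.
move=> adm.
have hadj : ~~ pair23 j k -> ~ d_separated EP j k S.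
  by move=> np; apply; apply: adj_conn dcg_EP adm (adjEP adm.1 np).
move: j k adm hadj; apply: ord4_cases; apply: ord4_cases => adm hadj;
  rewrite /specialP /=;
  try (split => [h|]; [exfalso; exact: hadj h | by case]).
all: have [_ [jS kS]] := adm; rewrite /sbits /=.
all: case e0 : (v0 \in S); case e1 : (v1 \in S) => /=.
- split => [//|_]; apply: (sep2 (u := v1) (v := v0)) => //.
  + exact: ninEP2.
  + by apply: ord4_cases; rewrite !inE.
  + by apply: ord4_cases; rewrite !inE.
- split => [h|]; last by case/eqP.
  exfalso; apply: h.
  apply: (@conn4 4 EP S _ v1 v0 _ true true false) => //;
    rewrite ?inE ?e0 ?e1 // => _; apply: a00; rewrite ?e0 ?e1 //.
- split => [h|]; last by case/eqP.
  exfalso; apply: h.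
  apply: (@conn4 4 EP S _ v1 v0 _ true false false) => //;
    rewrite ?inE ?e0 ?e1 // => _; apply: a00; rewrite ?e0 ?e1 //.
- split => [//|_].
  have hS : forall i, i \notin S by apply: ord4_cases; rewrite ?e0 ?e1.
  rewrite -(S0EP (j := v2) (k := v3) _ hS) //; exact: sepB nadjEP.
- split => [//|_]; apply: (sep2 (u := v0) (v := v1)) => //.
  + exact: ninEP3.
  + by apply: ord4_cases; rewrite !inE.
  + by apply: ord4_cases; rewrite !inE.
- split => [h|]; last by case/eqP.
  exfalso; apply: h.
  apply: (@conn4 4 EP S _ v0 v1 _ true false false) => //;
    rewrite ?inE ?e0 ?e1 // => _; apply: a00; rewrite ?e0 ?e1 //.
- split => [h|]; last by case/eqP.
  exfalso; apply: h.
  apply: (@conn4 4 EP S _ v0 v1 _ true true false) => //;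
    rewrite ?inE ?e0 ?e1 // => _; apply: a00; rewrite ?e0 ?e1 //.
- split => [//|_].
  have hS : forall i, i \notin S by apply: ord4_cases; rewrite ?e0 ?e1.
  rewrite -(S0EP (j := v3) (k := v2) _ hS) //; exact: sepB nadjEP'.
Qed.

Lemma pair_special (j k : 'I_4) (s : nat -> bool) : ~~ pair23 j k -> ~~ specialP j k s.
Proof. by move: j k; apply: ord4_cases; apply: ord4_cases. Qed.

Lemma pair_special2 (j k : 'I_4) (s : nat -> bool) : pair23 j k -> s 0%N == s 1%N -> specialP j k s.
Proof. by move: j k; apply: ord4_cases; apply: ord4_cases => // _ ->. Qed.

Lemma special_pair (j k : 'I_4) (s : nat -> bool) : specialP j k s -> pair23 j k /\ s 0%N = s 1%N.
Proof.
move: j k; apply: ord4_cases; apply: ord4_cases => //; rewrite /specialP /= => /eqP //.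
Qed.

Lemma P_CI_char (R : realType) (j k : 'I_4) (S : {set 'I_4}) : admissible j k S ->
  (cond_indep (unif R 7) (@Xf R 4 fP) j k S <-> specialP j k (sbits S)).
Proof.
move=> adm; split.
  by move=> h; apply/negPn/negP => ns; exact: (faithP adm ns h).
move=> /special_pair [hp]; rewrite /sbits /=.
have [jk [jS kS]] := adm.
case e0 : (v0 \in S); case e1 : (v1 \in S) => // _.
  apply: trivP => //.
  by case/orP: hp => /andP [/eqP -> _]; [left|right].
apply: indepP => //.
by apply: ord4_cases; rewrite ?e0 ?e1 //; case/orP: hp => /andP [/eqP hj /eqP hk];
  rewrite -?hj -?hk.
Qed.

Lemma EG_dsep (j k : 'I_4) (S : {set 'I_4}) : admissible j k S ->
  d_separated EG j k S -> [&& pair23 j k, v0 \in S & v1 \in S].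
Proof.
move=> adm ds.
case hp : (pair23 j k); last first.
  by exfalso; apply: ds; apply: adj_conn dcg_EG adm (adjEG adm.1 _); rewrite hp.
rewrite /=; have [jk [jS kS]] := adm.
case e0 : (v0 \in S); case e1 : (v1 \in S) => //=; exfalso; apply: ds;
  case/orP: hp => /andP [/eqP hj /eqP hk]; subst j k.
- apply: (@conn3 4 EG S v2 v1 v3 false true) => //; by rewrite ?inE ?e1.
- apply: (@conn3 4 EG S v3 v1 v2 false true) => //; by rewrite ?inE ?e1.
- apply: (@conn3 4 EG S v2 v0 v3 false true) => //; by rewrite ?inE ?e0.
- apply: (@conn3 4 EG S v3 v0 v2 false true) => //; by rewrite ?inE ?e0.
- apply: (@conn3 4 EG S v2 v0 v3 false true) => //; by rewrite ?inE ?e0.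
- apply: (@conn3 4 EG S v3 v0 v2 false true) => //; by rewrite ?inE ?e0.
Qed.

Lemma skel_sub p (E1 E2 : {set 'I_p * 'I_p}) : is_dcg E1 -> is_dcg E2 ->
  (forall j k S, admissible j k S -> d_separated E2 j k S -> d_separated E1 j k S) ->
  skeleton E1 \subset skeleton E2.
Proof.
move=> d1 d2 h; apply/fintype.subsetP => -[j k]; rewrite !inE /= => /andP [jk adj].
rewrite jk /=; apply/negPn/negP => nadj.
have jk' : j != k by apply/eqP => e; move: jk; rewrite e ltnn.
have := h _ _ _ (adm_S0 E2 jk') (sepB jk' nadj); apply.
exact: adj_conn d1 (adm_S0 E2 jk') adj.
Qed.

Lemma cmcPG (R : realType) : CMC (unif R 7) (@Xf R 4 fP) EG.
Proof.
move=> j k S adm ds; apply/(P_CI_char R adm).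
case/and3P: (EG_dsep adm ds) => hp e0 e1.
by apply: pair_special2 => //; rewrite /sbits /= e0 e1.
Qed.

Lemma cfcPEP (R : realType) : CFC (unif R 7) (@Xf R 4 fP) EP.
Proof.
move=> j k S adm; apply: (iff_trans (EP_dsep_char adm)); apply: iff_sym; exact: P_CI_char.
Qed.

Definition emp : {set 'I_4} := finset.set0.
Lemma in_emp (x : 'I_4) : (x \in emp) = false. Proof. exact: finset.in_set0. Qed.

Lemma adm230 : admissible v2 v3 emp.
Proof. by split => //; rewrite !in_emp. Qed.

Lemma dsepEP230 : d_separated EP v2 v3 emp.
Proof. by apply/(EP_dsep_char adm230); rewrite /specialP /sbits /= !in_emp. Qed.

Lemma not_dsepEG230 : ~ d_separated EG v2 v3 emp.
Proof. by move=> /(EG_dsep adm230); rewrite !in_emp andbF. Qed.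

Lemma cmcQEG (R : realType) : CMC (unif R 1) (@Xf R 4 fQ) EG.
Proof.
move=> j k S adm ds; case/and3P: (EG_dsep adm ds) => _ e0 _; exact: trivQ.
Qed.

Lemma not_cmcQEP (R : realType) : ~ CMC (unif R 1) (@Xf R 4 fQ) EP.
Proof.
move=> h; apply: (@nonCIQ R emp); first by move=> i; rewrite in_emp.
exact: h _ _ _ adm230 dsepEP230.
Qed.

Lemma neqGP (R : realType) : ~ markov_equiv R EG EP.
Proof.
move=> h; apply: (@not_cmcQEP R).
by apply/(h _ _ (unif R 1) (@Xf R 4 fQ) (@Xf_ms R 4 fQ)); exact: cmcQEG.
Qed.

Lemma neqPG (R : realType) : ~ markov_equiv R EP EG.
Proof.
move=> h; apply: (@not_cmcQEP R).
by apply/(h _ _ (unif R 1) (@Xf R 4 fQ) (@Xf_ms R 4 fQ)); exact: cmcQEG.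
Qed.

Lemma skelGP : skeleton EG \subset skeleton EP.
Proof.
apply/fintype.subsetP => -[j k]; rewrite !inE /= => /andP [jk adj]; rewrite jk /=.
apply: adjEP; first by apply/eqP => e; move: jk; rewrite e ltnn.
apply/negP => /orP [] /andP [/eqP ej /eqP ek]; subst j k => //.
by move: adj; rewrite (negbTE nadjEG).
Qed.

Unset Implicit Arguments.
Local Close Scope ring_scope.
Local Close Scope classical_set_scope.

Theorem theorem3 (R : realType) :
  (forall (p : nat) (E : {set 'I_p * 'I_p}) (d : measure_display)
     (Omega : measurableType d) (P : probability Omega R)
     (X : 'I_p -> Omega -> R),
     is_dcg E -> random_vector X -> CFC P X E -> weak_SMR P X E) /\
  (exists (p : nat) (E : {set 'I_p * 'I_p}) (d : measure_display)
     (Omega : measurableType d) (P : probability Omega R)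
     (X : 'I_p -> Omega -> R),
     [/\ is_dcg E, random_vector X, CFC P X E & ~ identifiable_SMR P X E]) /\
  (forall (p : nat) (E : {set 'I_p * 'I_p}) (d : measure_display)
     (Omega : measurableType d) (P : probability Omega R)
     (X : 'I_p -> Omega -> R),
     is_dcg E -> random_vector X -> identifiable_SMR P X E -> P_minimal P X E) /\
  (exists (p : nat) (E : {set 'I_p * 'I_p}) (d : measure_display)
     (Omega : measurableType d) (P : probability Omega R)
     (X : 'I_p -> Omega -> R),
     [/\ is_dcg E, random_vector X, weak_SMR P X E & ~ P_minimal P X E]).
Proof.
split; [|split; [|split]].
- move=> p E d Omega P X dcg _ cfc; split.
    by move=> j k S adm ds; exact: (cfc j k S adm).1.
  move=> G dcgG cmcG _; apply: subset_leq_card.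
  apply: skel_sub dcg dcgG _ => j k S adm ds.
  exact: (cfc j k S adm).2 (cmcG j k S adm ds).
- exists 4%N, EP, _, nat, (unif R 7), (@Xf R 4 fP); split.
  + exact: dcg_EP.
  + exact: Xf_ms.
  + exact: cfcPEP.
  + move=> [_ ident]; have := ident EG dcg_EG (@cmcPG R) (@neqGP R).
    by rewrite ltnNge (subset_leq_card skelGP).
- move=> p E d Omega P X dcg _ [cmc ident]; split => //.
  move=> [G [dcgG cmcG neq [sub _]]].
  have := ident G dcgG cmcG neq.
  by rewrite ltnNge (subset_leq_card (skel_sub dcgG dcg sub)).
- exists 4%N, EG, _, nat, (unif R 7), (@Xf R 4 fP); split.
  + exact: dcg_EG.
  + exact: Xf_ms.
  + split; first exact: cmcPG.
    move=> G' dcgG' cmcG' _; apply: subset_leq_card.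
    apply/fintype.subsetP => -[j k]; rewrite !inE /= => /andP [jk adj]; rewrite jk /=.
    have np : ~~ pair23 j k.
      apply/negP => /orP [] /andP [/eqP ej /eqP ek]; subst j k => //.
      by move: adj; rewrite (negbTE nadjEG).
    apply/negPn/negP => nadj.
    have jk' : j != k by apply/eqP => e; move: jk; rewrite e ltnn.
    have adm := adm_S0 G' jk'.
    apply: (faithP adm (pair_special _ np)).
    exact: cmcG' _ _ _ adm (sepB jk' nadj).
  + move=> [_]; apply; exists EP; split.
    * exact: dcg_EP.
    * by move=> j k S adm ds; exact: (@cfcPEP R j k S adm).1.
    * exact: neqPG.
    * split.
        move=> j k S adm ds; apply/(EP_dsep_char adm).
        case/and3P: (EG_dsep adm ds) => hp e0 e1.
        by apply: pair_special2 => //; rewrite /sbits /= e0 e1.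
      move=> h; apply: not_dsepEG230; exact: h _ _ _ adm230 dsepEP230.
Qed.
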